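(* Let $n\ge 2$ and let $D$ be an $n\times n$ unit spherical Euclidean distance matrix (EDM) of embedding dimension $r$, and let $w\in\mathbb{R}^n$ be a vector with $Dw=e$. Define the symmetric matrix $\Delta$ by $D = 2(E-I) + 2\Delta$. Then $\lambda_{\max}(\Delta)=1$, $w$ is an eigenvector of $\Delta$ associated with $\lambda_{\max}(\Delta)$, and $r = n - m(\lambda_{\max}(\Delta))$, where $m(\lambda_{\max}(\Delta))$ denotes the multiplicity of the eigenvalue $\lambda_{\max}(\Delta)$.
   Context: $e$ denotes the all-ones vector in $\mathbb{R}^n$, $E$ the $n\times n$ all-ones matrix, $I$ the $n\times n$ identity matrix. An $n\times n$ matrix $D=(d_{ij})$ is a Euclidean distance matrix (EDM) if there exist points $p^1,\dots,p^n$ in some Euclidean space with $d_{ij}=\|p^i-p^j\|^2$ for all $i,j$; the dimension of the affine span of these points is the embedding dimension of $D$. $D$ is a unit spherical EDM if such points can be chosen to lie on a sphere of radius $1$. For a real symmetric matrix $A$, $\lambda_{\max}(A)$ is its largest eigenvalue. *)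

(* Defs.v *)
From HB Require Import structures.
From mathcomp Require Import all_boot all_order all_algebra.
From mathcomp Require Import reals.
Set Implicit Arguments. Unset Strict Implicit. Unset Printing Implicit Defensive.
Import Order.TTheory GRing.Theory Num.Theory.
Local Open Scope ring_scope.

Definition sqdist {R : ringType} {k : nat} (u v : 'rV[R]_k) : R :=
  \sum_(l < k) (u 0 l - v 0 l) ^+ 2.

Definition realizes {R : ringType} {n k : nat} (D : 'M[R]_n) (P : 'M[R]_(n, k)) :=
  forall i j, D i j = sqdist (row i P) (row j P).

(* dimension of the affine span of the rows of P: rank [e P] - 1 *)
Definition affdim {R : fieldType} {n k : nat} (P : 'M[R]_(n, k)) : nat :=
  (\rank (row_mx (const_mx 1 : 'M[R]_(n, 1)) P)).-1.

Definition is_EDM {R : ringType} {n : nat} (D : 'M[R]_n) :=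
  exists k (P : 'M[R]_(n, k)), realizes D P.

Definition EDM_embdim {R : fieldType} {n : nat} (D : 'M[R]_n) (r : nat) :=
  exists k (P : 'M[R]_(n, k)), realizes D P /\ affdim P = r.

(* D is a unit spherical EDM: realized by points lying on a sphere of radius 1
   whose center lies in the affine span of the points (i.e. the radius of D,
   the circumradius of its generating points, is 1). *)
Definition unit_spherical_EDM {R : fieldType} {n : nat} (D : 'M[R]_n) :=
  exists k (P : 'M[R]_(n, k)) (c : 'rV[R]_k),
    [/\ realizes D P,
        (forall i, sqdist (row i P) c = 1) &
        exists a : 'rV[R]_n, \sum_i a 0 i = 1 /\ c = a *m P].

Definition is_lambda_max {R : realFieldType} {n : nat} (A : 'M[R]_n) (l : R) :=
  eigenvalue A l /\ forall m, eigenvalue A m -> m <= l.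

Definition is_eigenvector {R : ringType} {n : nat} (A : 'M[R]_n) (l : R) (w : 'cV[R]_n) :=
  w != 0 /\ A *m w = l *: w.

(* multiplicity of eigenvalue l of A (dimension of its eigenspace; equal to the
   algebraic multiplicity for symmetric real matrices) *)
Definition eig_mult {R : fieldType} {n : nat} (A : 'M[R]_n) (l : R) : nat :=
  \rank (eigenspace A l).

(* Main.v *)
Require Import Defs.
From HB Require Import structures.
From mathcomp Require Import all_boot all_order all_algebra.
From mathcomp Require Import reals.
From mathcomp Require Import zify ring lra.
Import Order.TTheory GRing.Theory Num.Theory.
Local Open Scope ring_scope.


Section H.
Context {R : realFieldType}.

Lemma gram_entry {m k} (M : 'M[R]_(m,k)) i j :
  (M *m M^T) i j = \sum_l M i l * M j l.
Proof. by rewrite !mxE; apply: eq_bigr => l _; rewrite mxE. Qed.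

Lemma gram0 {m k} (M : 'M[R]_(m,k)) : M *m M^T = 0 -> M = 0.
Proof.
move=> H; apply/matrixP => i l; rewrite mxE.
have := congr1 (fun A : 'M[R]_m => A i i) H; rewrite gram_entry mxE => Hs.
have Hp : forall l', xpredT l' -> 0 <= M i l' * M i l'.
  by move=> l' _; rewrite -expr2 sqr_ge0.
have := psumr_eq0P Hp Hs (isT : xpredT l).
by move/eqP; rewrite mulf_eq0 orbb => /eqP.
Qed.

Lemma ker_gram {m k} (M : 'M[R]_(m,k)) : (kermx (M *m M^T) == kermx M)%MS.
Proof.
apply/andP; split; rewrite sub_kermx; last by rewrite mulmxA mulmx_ker mul0mx.
apply/eqP/gram0; rewrite trmx_mul mulmxA -[X in X *m _]mulmxA mulmx_ker mul0mx //.
Qed.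

Lemma rank_gram {m k} (M : 'M[R]_(m,k)) : \rank (M *m M^T) = \rank M.
Proof.
have := eqmx_rank (ker_gram M); rewrite !mxrank_ker.
have := rank_leq_row (M *m M^T)%R; have := rank_leq_row M. lia.
Qed.


Lemma rank_shift {m k} (e : 'cV[R]_m) (M : 'M[R]_(m,k)) (x : 'rV[R]_k) :
  \rank (row_mx e (M - e *m x)) = \rank (row_mx e M).
Proof.
have E : forall M' (y : 'rV[R]_k), row_mx e (M' + e *m y) = row_mx e M' *m block_mx 1%:M y 0 1%:M.
  by move=> M' y; rewrite mul_row_block !mulmx1 !mulmx0 addr0 addrC.
apply/eqP; rewrite eqn_leq; apply/andP; split.
  by rewrite -mulmxN E mxrankM_maxl.
by rewrite -{1}(subrK (e *m x) M) E mxrankM_maxl.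
Qed.

Lemma rank_rowe {m k} (e : 'cV[R]_m) (a : 'rV[R]_m) (M : 'M[R]_(m,k)) :
  a *m e = 1 -> a *m M = 0 -> \rank (row_mx e M) = (\rank M).+1.
Proof.
move=> Hae HaM.
rewrite -mxrank_tr tr_row_mx.
have /eqmxP/eqmx_rank <- := addsmxE e^T M^T.
have Hcap : (e^T :&: M^T)%MS = 0.
  have /submxP [X HX] := capmxSl e^T M^T.
  have /submxP [Y HY] := capmxSr e^T M^T.
  have H1 : (e^T :&: M^T)%MS *m a^T = X.
    by rewrite HX -mulmxA -trmx_mul Hae trmx1 mulmx1.
  have H2 : (e^T :&: M^T)%MS *m a^T = 0.
    by rewrite HY -mulmxA -trmx_mul HaM trmx0 mulmx0.
  by rewrite HX -H1 H2 mul0mx.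
have := mxrank_sum_cap e^T M^T; rewrite Hcap mxrank0 addn0 => ->.
rewrite !mxrank_tr -[\rank e]mxrank_tr rank_rV.
suff -> : e^T != 0 by [].
apply/eqP => H0; move: Hae; rewrite -[e]trmxK H0 trmx0 mulmx0 => /matrixP /(_ 0 0).
by rewrite !mxE /= => /eqP; rewrite eq_sym oner_eq0.
Qed.


Lemma center_entry {m k} (X : 'M[R]_(m,k)) (i0 : 'I_m) i l :
  (X - const_mx 1 *m row i0 X) i l = X i l - X i0 l.
Proof. by rewrite !mxE big_ord1 !mxE mul1r. Qed.

Lemma center_gram {m k} (X : 'M[R]_(m,k)) (i0 : 'I_m) i j :
  let Mc := X - const_mx 1 *m row i0 X in
  (Mc *m Mc^T) i j = (sqdist (row i X) (row i0 X) + sqdist (row j X) (row i0 X)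
                      - sqdist (row i X) (row j X)) / 2.
Proof.
move=> Mc; rewrite gram_entry /sqdist -big_split -sumrB /= mulr_suml.
apply: eq_bigr => l _; rewrite /Mc !center_entry !mxE; by field.
Qed.

Lemma rank_center {m k} (X : 'M[R]_(m,k)) (i0 : 'I_m) :
  \rank (row_mx (const_mx 1 : 'M[R]_(m,1)) X) = (\rank (X - const_mx 1 *m row i0 X)).+1.
Proof.
rewrite -(rank_shift _ _ (row i0 X)); apply: (rank_rowe _ (delta_mx 0 i0)).
  apply/matrixP => x y; rewrite (ord1 x) (ord1 y) -rowE !mxE.
  by rewrite eqxx.
by rewrite -rowE; apply/matrixP => x y; rewrite mxE center_entry subrr mxE.
Qed.

End H.

Theorem lemma3p2 (R : realType) (n r : nat) (D Delta : 'M[R]_n) (w : 'cV[R]_n) :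
  (2 <= n)%N ->
  unit_spherical_EDM D ->
  EDM_embdim D r ->
  D *m w = const_mx 1 ->
  D = 2%:R *: (const_mx 1 - 1%:M) + 2%:R *: Delta ->
  [/\ is_lambda_max Delta 1,
      is_eigenvector Delta 1 w &
      r = (n - eig_mult Delta 1)%N].
Proof.
move=> Hn [k [P [c [HP Hc [a [Ha Hca]]]]]] [k' [P' [HP' Hr]]] Hw HD.
have n0 : (0 < n)%N by lia.
pose i0 : 'I_n := Ordinal n0.
pose e : 'cV[R]_n := const_mx 1.
pose Q := P - e *m c.
pose G := Q *m Q^T.
have HG : forall i j, G i j = \sum_l Q i l * Q j l by move=> i j; exact: gram_entry.
have HQ : forall i l, Q i l = P i l - c 0 l.
  by move=> i l; rewrite !mxE big_ord1 !mxE mul1r.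
have Gii : forall i, G i i = 1.
  move=> i; rewrite -(Hc i) HG /sqdist; apply: eq_bigr => l _.
  by rewrite !HQ !mxE expr2.
have HDij : forall i j, D i j = 2 - 2 * G i j.
  move=> i j; suff -> : D i j = G i i + G j j - 2 * G i j by rewrite !Gii.
  rewrite HP /sqdist !HG mulr_sumr -big_split -sumrB /=.
  by apply: eq_bigr => l _; rewrite !HQ !mxE; ring.
have HDelta : Delta = 1%:M - G.
  move: (G) HDij => G0 HD0.
  apply/matrixP => i j; have := congr1 (fun A : 'M[R]_n => A i j) HD.
  rewrite !mxE HD0.
  by case: (i == j) => /= h; lra.
have Hae : a *m e = 1.
  apply/matrixP => x y; rewrite (ord1 x) (ord1 y) !mxE -Ha.
  by apply: eq_bigr => i _; rewrite mxE mulr1.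
have HaQ : a *m Q = 0 by rewrite /Q mulmxBr mulmxA Hae mul1mx Hca subrr.
have HaG : a *m G = 0 by rewrite /G mulmxA HaQ mul0mx.
pose s := \sum_j w j 0.
have h1 : forall i, (G *m w) i 0 = s - 1/2.
  move=> i; have := congr1 (fun A : 'cV[R]_n => A i 0) Hw; rewrite !mxE.
  rewrite (eq_bigr (fun j => 2 * w j 0 - 2 * (G i j * w j 0))); last first.
    by move=> j _; rewrite HDij; ring.
  rewrite sumrB -!mulr_sumr -/s; lra.
have hs : s - 1/2 = 0.
  have : (a *m (G *m w)) 0 0 = 0 by rewrite mulmxA HaG mul0mx mxE.
  rewrite mxE (eq_bigr (fun i => a 0 i * (s - 1/2))); last by move=> i _; rewrite h1.
  by rewrite -mulr_suml Ha mul1r.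
have HGw : G *m w = 0 by apply/matrixP => i j; rewrite (ord1 j) h1 hs mxE.
have HDw : Delta *m w = w by rewrite HDelta mulmxBl mul1mx HGw subr0.
have wn0 : w != 0.
  apply/eqP => w0; move: Hw; rewrite w0 mulmx0 => /matrixP/(_ i0 0).
  by rewrite !mxE => /eqP; rewrite eq_sym oner_eq0.
have Dsym : Delta^T = Delta.
  rewrite HDelta; move: (G) HG => G0 HG0.
  apply/matrixP => i j; rewrite !mxE !HG0 eq_sym.
  by congr (_ - _); apply: eq_bigr => l _; rewrite mulrC.
split.
- split.
    apply/eigenvalueP; exists w^T; last by rewrite trmx_eq0.
    by rewrite -{1}Dsym -trmx_mul HDw scale1r.
  move=> m /eigenvalueP [v Hv vn0].
  have HvG : v *m G = (1 - m) *: v.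
    by move: Hv; rewrite HDelta mulmxBr mulmx1 scalerBl scale1r => <-; rewrite opprB addrC subrK.
  have H1 : (v *m G *m v^T) 0 0 = (1 - m) * (v *m v^T) 0 0.
    by rewrite HvG -scalemxAl mxE.
  have H2 : 0 <= (v *m G *m v^T) 0 0.
    rewrite /G mulmxA -mulmxA -trmx_mul gram_entry.
    by apply: sumr_ge0 => l _; rewrite -expr2 sqr_ge0.
  have H3 : 0 < (v *m v^T) 0 0.
    rewrite lt0r; apply/andP; split.
      apply/eqP => H0; move/eqP: vn0; apply; apply: gram0.
      by apply/matrixP => x y; rewrite (ord1 x) (ord1 y) H0 mxE.
    by rewrite gram_entry; apply: sumr_ge0 => l _; rewrite -expr2 sqr_ge0.
  move: H2; rewrite H1 pmulr_lge0 // subr_ge0 => //.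
- by split; rewrite ?scale1r.
have HmG : Delta - 1%:M = - G by rewrite HDelta addrAC subrr add0r.
have Ekm : (kermx (- G) == kermx G)%MS.
  apply/andP; split; rewrite sub_kermx.
    by rewrite -oppr_eq0 -mulmxN mulmx_ker.
  by rewrite mulmxN oppr_eq0 mulmx_ker.
rewrite /eig_mult /eigenspace HmG (eqmx_rank Ekm) (eqmx_rank (ker_gram Q)) mxrank_ker.
have RQ : \rank (row_mx e Q) = (\rank Q).+1 := rank_rowe _ _ _ Hae HaQ.
have RP : \rank (row_mx e P) = (\rank Q).+1 by rewrite -RQ /Q rank_shift.
rewrite /affdim in Hr.
have Egram : let M := P - const_mx 1 *m row i0 P in
             let M' := P' - const_mx 1 *m row i0 P' in M *m M^T = M' *m M'^T.
  by move=> M M'; apply/matrixP => i j; rewrite !center_gram -!HP -!HP'.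
move: Egram => /= /(congr1 mxrank); rewrite !rank_gram => Er.
have := rank_center P i0; have := rank_center P' i0.
rewrite -Er => h' h; rewrite /e in RP; rewrite -Hr h'.
move: h; rewrite RP => -[<-] /=; rewrite subKn //; exact: rank_leq_row.
Qed.
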